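(* Let $d\ge0$, $s,m\ge1$, and let $\mathbf{M}_0\in\mathbb{Z}^{s\times m}$ be an integer matrix such that $\bm{u}\mapsto\mathbf{M}_0\bm{u}$ is injective on $\{0,1\}^m$. Let $\mathbf{P}=\mathbf{H}_{2^d}\otimes\mathbf{M}_0$ and let $\mathbf{Q}^1,\mathbf{Q}^2$ be real matrices with $\mathbf{Q}^1-\mathbf{Q}^2=\mathbf{P}$, and $\mathbf{Q}=\begin{bmatrix}\mathbf{Q}^1\\ \mathbf{Q}^2\end{bmatrix}$. Let $\bm{x}=(\bm{x}_1,\dots,\bm{x}_{2^d})\in\{0,1\}^{2^dm}$ (blocks $\bm{x}_i\in\{0,1\}^m$), $\bm{n}'\in\mathbb{R}^{2^{d+1}s}$ and $\bm{y}'=\mathbf{Q}\bm{x}+\bm{n}'$. Consider the decoder: (1) compute $\bm{y}=\bm{y}'_u-\bm{y}'_l$ (upper half minus lower half of $\bm{y}'$); (2) compute $T_d(\bm{y})$ and split it into consecutive blocks $\bm{w}_1,\dots,\bm{w}_{2^d}\in\mathbb{R}^s$; (3) round each entry of each $\bm{w}_i$ to a nearest integer, obtaining $\tilde{\bm{w}}_i$; if $\tilde{\bm{w}}_i=\mathbf{M}_0\bm{u}$ for some (necessarily unique) $\bm{u}\in\{0,1\}^m$ output $\hat{\bm{x}}_i=\bm{u}$, otherwise output an arbitrary $\hat{\bm{x}}_i\in\{0,1\}^m$. Then the number of indices $i$ with $\hat{\bm{x}}_i\neq\bm{x}_i$ is at most $4\cdot 2^{-d}\lVert\bm{y}-\mathbf{P}\bm{x}\rVert_2^2\le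 8\cdot2^{-d}\lVert\bm{n}'\rVert_2^2$; in particular $\hat{\bm{x}}=(\hat{\bm{x}}_1,\dots,\hat{\bm{x}}_{2^d})$ differs from $\bm{x}$ in at most $8m\,2^{-d}\lVert\bm{n}'\rVert_2^2$ coordinates.
   Context: $\mathbf{H}_{2^d}$ is the Sylvester-type Hadamard matrix: $\mathbf{H}_1=[1]$, $\mathbf{H}_{2k}=\begin{bmatrix}\mathbf{H}_k&\mathbf{H}_k\\ \mathbf{H}_k&-\mathbf{H}_k\end{bmatrix}$; $\otimes$ is the Kronecker product. The map $T_d:\mathbb{R}^{2^ds}\to\mathbb{R}^{2^ds}$ is defined recursively by $T_0(\bm{v})=\bm{v}$ and, for $d\ge1$, with $\bm{v}=(\bm{v}_u,\bm{v}_l)$ split into upper and lower halves, $T_d(\bm{v})=\big(T_{d-1}(\tfrac{\bm{v}_u+\bm{v}_l}{2}),T_{d-1}(\tfrac{\bm{v}_u-\bm{v}_l}{2})\big)$. *)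

(* Defs.v *)
From HB Require Import structures.
From mathcomp Require Import all_boot all_order all_algebra.
From mathcomp Require Export mxtens.
From mathcomp Require Import reals.
Set Implicit Arguments. Unset Strict Implicit. Unset Printing Implicit Defensive.
Import Order.TTheory GRing.Theory Num.Theory.
Local Open Scope ring_scope.

Lemma pow2S d : (2 ^ d.+1 = 2 ^ d + 2 ^ d)%N.
Proof. by rewrite expnS mul2n addnn. Qed.

Lemma pow2S_mul d s : (2 ^ d.+1 * s = 2 ^ d * s + 2 ^ d * s)%N.
Proof. by rewrite pow2S mulnDl. Qed.

Fixpoint hadamard (R : pzRingType) (d : nat) : 'M[R]_(2 ^ d) :=
  match d as d0 return 'M[R]_(2 ^ d0) with
  | 0 => 1%:M
  | d'.+1 =>
      let H := hadamard R d' in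
      castmx (esym (pow2S d'), esym (pow2S d')) (block_mx H H H (- H))
  end.

Fixpoint Tmap (R : fieldType) (s d : nat) : 'cV[R]_(2 ^ d * s) -> 'cV[R]_(2 ^ d * s) :=
  match d as d0 return 'cV[R]_(2 ^ d0 * s) -> 'cV[R]_(2 ^ d0 * s) with
  | 0 => fun v => v
  | d'.+1 => fun v =>
      let v' := castmx (pow2S_mul d' s, erefl 1%N) v in
      castmx (esym (pow2S_mul d' s), erefl 1%N)
        (col_mx (Tmap (2%:R^-1 *: (usubmx v' + dsubmx v')))
                (Tmap (2%:R^-1 *: (usubmx v' - dsubmx v'))))
  end.

(* The i-th block (entries i*k, ..., i*k + k - 1) of a vector of length n*k. *)
Definition blockv (T : Type) (n k : nat) (v : 'cV[T]_(n * k)) (i : 'I_n) : 'cV[T]_k :=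
  \col_j v (mxtens_index (i, j)) 0.

Definition bvec (R : pzSemiRingType) (n : nat) (u : 'cV[bool]_n) : 'cV[R]_n :=
  map_mx (fun b : bool => (b%:R : R)) u.

Definition sqnorm (R : pzSemiRingType) (n : nat) (v : 'cV[R]_n) : R :=
  \sum_(i < n) v i 0 ^+ 2.

Arguments bvec {R n} u.
Arguments Tmap {R s d} _.
Arguments blockv {T n k} v i.
Arguments sqnorm {R n} v.

(* Main.v *)
Require Import Defs.
From HB Require Import structures.
From mathcomp Require Import all_boot all_order all_algebra.
From mathcomp Require Import mxtens ring lra.
From mathcomp Require Import reals.
Set Implicit Arguments. Unset Strict Implicit. Unset Printing Implicit Defensive.
Import Order.TTheory GRing.Theory Num.Theory.
Local Open Scope ring_scope.

Definition lo d (i : 'I_(2 ^ d)) : 'I_(2 ^ d.+1) := cast_ord (esym (pow2S d)) (lshift (2 ^ d) i).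
Definition hi d (i : 'I_(2 ^ d)) : 'I_(2 ^ d.+1) := cast_ord (esym (pow2S d)) (rshift (2 ^ d) i).

Lemma lo_idx d s (i : 'I_(2 ^ d)) (j : 'I_s) :
  cast_ord (esym (pow2S_mul d s)) (lshift _ (mxtens_index (i, j))) = mxtens_index (lo i, j).
Proof. by apply: val_inj. Qed.

Lemma hi_idx d s (i : 'I_(2 ^ d)) (j : 'I_s) :
  cast_ord (esym (pow2S_mul d s)) (rshift _ (mxtens_index (i, j))) = mxtens_index (hi i, j).
Proof. by apply: val_inj => /=; rewrite mulnDl addnA. Qed.

Lemma lo_idx' d s (i : 'I_(2 ^ d)) (j : 'I_s) :
  cast_ord (pow2S_mul d s) (mxtens_index (lo i, j)) = lshift _ (mxtens_index (i, j)).
Proof. by apply: val_inj. Qed.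

Lemma hi_idx' d s (i : 'I_(2 ^ d)) (j : 'I_s) :
  cast_ord (pow2S_mul d s) (mxtens_index (hi i, j)) = rshift _ (mxtens_index (i, j)).
Proof. by apply: val_inj => /=; rewrite mulnDl addnA. Qed.

Lemma lo_hi_ind d (P : 'I_(2 ^ d.+1) -> Prop) :
  (forall i, P (lo i)) -> (forall i, P (hi i)) -> forall i, P i.
Proof.
move=> Hl Hh i; have -> : i = cast_ord (esym (pow2S d)) (cast_ord (pow2S d) i) by apply: val_inj.
case: (splitP (cast_ord (pow2S d) i)) => k hk.
- have -> : cast_ord (pow2S d) i = lshift _ k by apply: val_inj.
  exact: Hl.
- have -> : cast_ord (pow2S d) i = rshift _ k by apply: val_inj.
  exact: Hh.
Qed.

Lemma big_tens (T : Type) (idx : T) (op : Monoid.com_law idx) a b (F : 'I_(a * b) -> T) :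
  \big[op/idx]_(k < a * b) F k = \big[op/idx]_(i < a) \big[op/idx]_(j < b) F (mxtens_index (i, j)).
Proof.
rewrite pair_bigA /= (reindex (@mxtens_index a b)) /=.
  by apply: eq_bigr => -[i j].
exists (@mxtens_unindex a b) => k _; by rewrite (mxtens_indexK, mxtens_unindexK).
Qed.

Lemma castmxD (R : pzRingType) n n' (e : n = n') (a b : 'cV[R]_n) :
  castmx (e, erefl 1%N) (a + b) = castmx (e, erefl 1%N) a + castmx (e, erefl 1%N) b.
Proof. by case: n' / e; rewrite !castmx_id. Qed.

Lemma sqnorm_cast (R : pzRingType) n n' (e : n = n') (a : 'cV[R]_n) :
  sqnorm (castmx (e, erefl 1%N) a) = sqnorm a.
Proof. by case: n' / e; rewrite !castmx_id. Qed.

Lemma sqnorm_col (R : pzRingType) n1 n2 (a : 'cV[R]_n1) (b : 'cV[R]_n2) :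
  sqnorm (col_mx a b) = sqnorm a + sqnorm b.
Proof.
rewrite /sqnorm big_split_ord /=; congr (_ + _); apply: eq_bigr => i _;
by rewrite ?col_mxEu ?col_mxEd.
Qed.

Lemma blockvD (R : pzRingType) n k (a b : 'cV[R]_(n * k)) i :
  blockv (a + b) i = blockv a i + blockv b i.
Proof. by apply/matrixP => j l; rewrite !mxE. Qed.

Lemma sqnorm_blocks (R : pzRingType) n k (a : 'cV[R]_(n * k)) :
  sqnorm a = \sum_(i < n) sqnorm (blockv a i).
Proof.
rewrite /sqnorm big_tens; apply: eq_bigr => i _; apply: eq_bigr => j _.
by rewrite mxE.
Qed.
Lemma ord_add_ind n1 n2 (P : 'I_(n1 + n2) -> Prop) :
  (forall i, P (lshift _ i)) -> (forall i, P (rshift _ i)) -> forall i, P i.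
Proof. by move=> Hl Hr i; rewrite -(splitK i); case: (split i) => j /=. Qed.

Lemma TmapS (F : fieldType) s d (v : 'cV[F]_(2 ^ d.+1 * s)) :
  Tmap v = castmx (esym (pow2S_mul d s), erefl 1%N)
        (col_mx (Tmap (2%:R^-1 *: (usubmx (castmx (pow2S_mul d s, erefl 1%N) v)
                                   + dsubmx (castmx (pow2S_mul d s, erefl 1%N) v))))
                (Tmap (2%:R^-1 *: (usubmx (castmx (pow2S_mul d s, erefl 1%N) v)
                                   - dsubmx (castmx (pow2S_mul d s, erefl 1%N) v))))).
Proof. by []. Qed.

Lemma hadamardS (F : pzRingType) d :
  hadamard F d.+1 = castmx (esym (pow2S d), esym (pow2S d))
     (block_mx (hadamard F d) (hadamard F d) (hadamard F d) (- hadamard F d)).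
Proof. by []. Qed.

Lemma TmapD (F : fieldType) s d (a b : 'cV[F]_(2 ^ d * s)) :
  Tmap (a + b) = Tmap a + Tmap b.
Proof.
elim: d a b => [//|d IH] a b.
rewrite !TmapS castmxD !raddfD /= -castmxD add_col_mx -!IH.
by congr (castmx _ (col_mx (Tmap _) (Tmap _))); rewrite addrACA.
Qed.

Lemma sqnorm_par (F : numFieldType) n (a b : 'cV[F]_n) :
  2%:R * (sqnorm (2%:R^-1 *: (a + b)) + sqnorm (2%:R^-1 *: (a - b))) = sqnorm a + sqnorm b.
Proof.
rewrite /sqnorm -!big_split mulr_sumr; apply: eq_bigr => i _ /=.
rewrite !mxE.
have h2 : (2%:R : F) != 0 by rewrite pnatr_eq0.
field.
by [].
Qed.

Lemma Tmap_sqnorm (F : numFieldType) s d (v : 'cV[F]_(2 ^ d * s)) :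
  2%:R ^+ d * sqnorm (Tmap v) = sqnorm v.
Proof.
elim: d v => [|d IH] v; first by rewrite expr0 mul1r.
rewrite TmapS sqnorm_cast sqnorm_col exprS -mulrA mulrDr !IH sqnorm_par.
by rewrite -sqnorm_col vsubmxK sqnorm_cast.
Qed.

Lemma cast_mulmx (F : pzRingType) m m' n n' p (em : m = m') (en : n = n')
  (M : 'M[F]_(m, n)) (N : 'M[F]_(n, p)) :
  castmx (em, erefl p) (M *m N) = castmx (em, en) M *m castmx (en, erefl p) N.
Proof. by case: m' / em; case: n' / en; rewrite !castmx_id. Qed.

Lemma lo_cast d (i : 'I_(2 ^ d)) : cast_ord (pow2S d) (lo i) = lshift _ i.
Proof. by apply: val_inj. Qed.
Lemma hi_cast d (i : 'I_(2 ^ d)) : cast_ord (pow2S d) (hi i) = rshift _ i.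
Proof. by apply: val_inj. Qed.

Lemma tensS (F : pzRingType) d s m (N : 'M[F]_(s, m)) :
  castmx (pow2S_mul d s, pow2S_mul d m) (hadamard F d.+1 *t N) =
  block_mx (hadamard F d *t N) (hadamard F d *t N) (hadamard F d *t N) (- (hadamard F d *t N)).
Proof.
apply/matrixP => a b; rewrite castmxE.
elim/ord_add_ind: a => a; case: (mxtens_indexP a) => i j;
elim/ord_add_ind: b => b; case: (mxtens_indexP b) => k l;
rewrite ?lo_idx ?hi_idx ?block_mxEul ?block_mxEur ?block_mxEdl ?block_mxEdr
  !tensmxE hadamardS castmxE /= ?esymK ?lo_cast ?hi_cast ?block_mxEul ?block_mxEur
  ?block_mxEdl ?block_mxEdr //.
by rewrite [RHS]mxE tensmxE mxE mulNr.
Qed.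
Lemma blockv_lo (F : Type) d s (A B : 'cV[F]_(2 ^ d * s)) i :
  blockv (castmx (esym (pow2S_mul d s), erefl 1%N) (col_mx A B)) (lo i) = blockv A i.
Proof. apply/matrixP => j l; rewrite !mxE castmxE /= cast_ord_id.
have -> : cast_ord (esym (esym (pow2S_mul d s))) (mxtens_index (lo i, j)) = lshift _ (mxtens_index (i, j)) by apply: val_inj.
by rewrite col_mxEu. Qed.

Lemma blockv_hi (F : Type) d s (A B : 'cV[F]_(2 ^ d * s)) i :
  blockv (castmx (esym (pow2S_mul d s), erefl 1%N) (col_mx A B)) (hi i) = blockv B i.
Proof. apply/matrixP => j l; rewrite !mxE castmxE /= cast_ord_id.
have -> : cast_ord (esym (esym (pow2S_mul d s))) (mxtens_index (hi i, j)) = rshift _ (mxtens_index (i, j)) by apply: val_inj => /=; rewrite mulnDl addnA.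
by rewrite col_mxEd. Qed.

Lemma blockv_u (F : Type) d s (x : 'cV[F]_(2 ^ d.+1 * s)) i :
  blockv (usubmx (castmx (pow2S_mul d s, erefl 1%N) x)) i = blockv x (lo i).
Proof. apply/matrixP => j l; rewrite !mxE castmxE /= cast_ord_id.
by rewrite lo_idx. Qed.

Lemma blockv_d (F : Type) d s (x : 'cV[F]_(2 ^ d.+1 * s)) i :
  blockv (dsubmx (castmx (pow2S_mul d s, erefl 1%N) x)) i = blockv x (hi i).
Proof. apply/matrixP => j l; rewrite !mxE castmxE /= cast_ord_id.
by rewrite hi_idx. Qed.

Lemma half2 (F : numFieldType) n (a : 'cV[F]_n) : 2%:R^-1 *: (a *+ 2) = a.
Proof.
by rewrite -scaler_nat scalerA mulVf ?pnatr_eq0 // scale1r.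
Qed.

Lemma TmapP (F : numFieldType) d s m (N : 'M[F]_(s, m)) (x : 'cV[F]_(2 ^ d * m)) i :
  blockv (Tmap ((hadamard F d *t N) *m x)) i = N *m blockv x i.
Proof.
elim: d x i => [|d IH] x i.
  apply/matrixP => j l; rewrite [l]ord1 !mxE /=.
  rewrite big_tens big_ord1; apply: eq_bigr => k _.
  by rewrite tensmxE [i]ord1 mxE mul1r mxE.
rewrite TmapS (cast_mulmx _ (pow2S_mul d m)) tensS.
rewrite -[castmx (pow2S_mul d m, _) x]vsubmxK mul_block_col col_mxKu col_mxKd.
set xu := usubmx _; set xl := dsubmx _.
set P := hadamard F d *t N.
have -> : P *m xu + P *m xl + (P *m xu + - P *m xl) = (P *m xu) *+ 2.
  by rewrite mulNmx addrACA subrr addr0.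
have -> : P *m xu + P *m xl - (P *m xu + - P *m xl) = (P *m xl) *+ 2.
  by rewrite mulNmx opprD opprK addrACA subrr add0r.
rewrite !half2.
elim/lo_hi_ind: i => i.
- by rewrite blockv_lo IH blockv_u.
- by rewrite blockv_hi IH blockv_d.
Qed.
Unset Implicit Arguments.
Theorem mainTheorem4 (R : realType) (d s m : nat) (hs : (0 < s)%N) (hm : (0 < m)%N)
  (M0 : 'M[int]_(s, m))
  (hinj : forall u v : 'cV[bool]_m, M0 *m bvec u = M0 *m bvec v -> u = v)
  (Q1 Q2 : 'M[R]_(2 ^ d * s, 2 ^ d * m))
  (hQ : Q1 - Q2 = hadamard R d *t map_mx (fun z : int => (z%:~R : R)) M0)
  (x : 'cV[bool]_(2 ^ d * m)) (n' : 'cV[R]_(2 ^ d * s + 2 ^ d * s))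
  (wt : 'I_(2 ^ d) -> 'cV[int]_s) (xhat : 'cV[bool]_(2 ^ d * m)) :
  let P := hadamard R d *t map_mx (fun z : int => (z%:~R : R)) M0 in
  let y' := col_mx Q1 Q2 *m bvec x + n' in
  let y := usubmx y' - dsubmx y' in
  let w := blockv (Tmap y) in
  (* step (3a): each entry of wt i is a nearest integer to the entry of w i *)
  (forall (i : 'I_(2 ^ d)) (j : 'I_s) (z : int),
      `|(wt i j 0)%:~R - w i j 0| <= `|z%:~R - w i j 0|) ->
  (* step (3b): if wt i = M0 u with u binary, the output block is u (else arbitrary) *)
  (forall (i : 'I_(2 ^ d)) (u : 'cV[bool]_m), wt i = M0 *m bvec u -> blockv xhat i = u) ->
  [/\ (#|[set i : 'I_(2 ^ d) | blockv xhat i != blockv x i]|%:R : R)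
        <= 4 / 2 ^+ d * sqnorm (y - P *m bvec x),
      4 / 2 ^+ d * sqnorm (y - P *m bvec x) <= 8 / 2 ^+ d * sqnorm n'
    & (#|[set j : 'I_(2 ^ d * m) | xhat j 0 != x j 0]|%:R : R)
        <= 8 * m%:R / 2 ^+ d * sqnorm n'].
Proof.
move=> P y' y w hround hdec.
set RM0 := map_mx (fun z : int => (z%:~R : R)) M0.
set e := usubmx n' - dsubmx n'.
have hy : y = P *m bvec x + e.
  rewrite /y /y' !raddfD /= mul_col_mx col_mxKu col_mxKd /e /P -hQ mulmxBl.
  by rewrite addrACA.
have hye : y - P *m bvec x = e by rewrite hy addrAC subrr add0r.
rewrite hye.
have he : sqnorm e <= 2%:R * sqnorm n'.
  rewrite -[n']vsubmxK sqnorm_col /e /sqnorm mulrDr !mulr_sumr -big_split /=.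
  apply: ler_sum => i _; rewrite !mxE.
  rewrite -subr_ge0.
  move: (n' (lshift _ i) 0) (n' (rshift _ i) 0) => a b.
  have -> : 2%:R * a ^+ 2 + 2%:R * b ^+ 2 - (a - b) ^+ 2 = (a + b) ^+ 2 by ring.
  exact: sqr_ge0.
set E := fun i => blockv (Tmap e) i.
have hw : forall i, w i = RM0 *m bvec (blockv x i) + E i.
  move=> i; rewrite /w hy TmapD blockvD TmapP; congr (_ *m _ + _).
  by apply/matrixP => j l; rewrite !mxE.
have hTe : sqnorm e = 2%:R ^+ d * \sum_i sqnorm (E i).
  by rewrite -(Tmap_sqnorm e) sqnorm_blocks.
set S := [set i : 'I_(2 ^ d) | blockv xhat i != blockv x i].
have hS : forall i, i \in S -> 1 / 4 <= sqnorm (E i).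
  move=> i; rewrite inE; apply: contraNT; rewrite -ltNge => hlt.
  apply/eqP; apply: hdec; apply/matrixP => j l; rewrite [l]ord1.
  set u := blockv x i.
  have ha : (((M0 *m bvec u) j 0)%:~R : R) = (RM0 *m bvec u) j 0.
    rewrite !mxE rmorph_sum; apply: eq_bigr => k _.
    by rewrite rmorphM /= !mxE rmorph_nat.
  have hEj : `|E i j 0| < 1 / 2.
    have h1 : E i j 0 ^+ 2 < 1 / 4.
      apply: le_lt_trans hlt; rewrite /sqnorm (bigD1 j) //= lerDl.
      by apply: sumr_ge0 => k _; apply: sqr_ge0.
    rewrite ltr_norml; apply/andP; split; nra.
  have hwij : w i j 0 = ((M0 *m bvec u) j 0)%:~R + E i j 0.
    by rewrite hw ha mxE.
  have := hround i j ((M0 *m bvec u) j 0).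
  rewrite hwij.
  set a := (M0 *m bvec u) j 0; set Ee := E i j 0.
  have -> : (a%:~R : R) - (a%:~R + Ee) = - Ee by rewrite opprD addrA subrr add0r.
  rewrite normrN => hr.
  have hlt1 : `|((wt i j 0 - a)%:~R : R)| < 1.
    have -> : ((wt i j 0 - a)%:~R : R) = ((wt i j 0)%:~R - (a%:~R + Ee)) + Ee.
      by rewrite intrB; ring.
    apply: le_lt_trans (ler_normD _ _) _.
    have : `|Ee| < 1 / 2 := hEj.
    move: hr; lra.
  rewrite -intr_norm ltrz1 in hlt1.
  apply/eqP; rewrite -subr_eq0 -normr_eq0.
  move: hlt1; case: (wt i j 0 - a) => [[|n]|n] //.
have h2d : (2%:R ^+ d : R) != 0 by rewrite expf_neq0 // pnatr_eq0.
have h1 : (#|S|%:R : R) <= 4 / 2%:R ^+ d * sqnorm e.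
  rewrite hTe mulrA divfK //.
  rewrite -sum1_card natr_sum.
  apply: (@le_trans _ _ (\sum_(i in S) 4 * sqnorm (E i))).
    by apply: ler_sum => i hi; have := hS i hi; lra.
  rewrite -mulr_sumr ler_wpM2l // [X in _ <= X](bigID (fun i => i \in S)) /= lerDl.
  by apply: sumr_ge0 => i _; apply: sumr_ge0 => k _; apply: sqr_ge0.
have h2 : 4 / 2%:R ^+ d * sqnorm e <= 8 / 2%:R ^+ d * sqnorm n'.
  have -> : 8 / 2%:R ^+ d * sqnorm n' = 4 / 2%:R ^+ d * (2%:R * sqnorm n') by ring.
  apply: ler_wpM2l => //.
  by rewrite divr_ge0 // exprn_ge0.
have h3 : leq #|[set j : 'I_(2 ^ d * m) | xhat j 0 != x j 0]| (m * #|S|)%N.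
  rewrite -sum1_card big_mkcond /= big_tens.
  apply: (@leq_trans (\sum_(i < 2 ^ d) if i \in S then m else 0)%N).
    apply: leq_sum => i _; case: ifP => hi.
      apply: (@leq_trans (\sum_(k < m) 1)%N); first by apply: leq_sum => k _; case: ifP.
      by rewrite sum1_card card_ord.
    have hb : blockv xhat i = blockv x i by move: hi; rewrite inE => /negbFE/eqP.
    rewrite big1 // => k _; rewrite inE.
    have := congr1 (fun M : 'cV[bool]_m => M k 0) hb; rewrite !mxE => ->.
    by rewrite eqxx.
  by rewrite -big_mkcond sum_nat_const mulnC.
split => //.
apply: (@le_trans _ _ (m%:R * #|S|%:R)).
  by rewrite -natrM ler_nat.
apply: (@le_trans _ _ (m%:R * (8 / 2%:R ^+ d * sqnorm n'))).
  by apply: ler_wpM2l => //; apply: le_trans h1 h2.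
by rewrite !mulrA [_ * 8]mulrC.
Qed.
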